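(* Let $R_o$ be a weak consistent digital ray system with root $o=(0,0)$ in $\mathbb{Z}^2$ whose error is less than $1.5$. Suppose $v\in Q_1$ does not extend to diagonal $d$, for some integer $d>D(v)$. Then $v^\nwarrow=(v_x-1,v_y+1)$ extends to diagonal $d$ if $v^\nwarrow\in Q_1$, and $v^\searrow=(v_x+1,v_y-1)$ extends to diagonal $d$ if $v^\searrow\in Q_1$.
   Context: The grid graph on $\mathbb{Z}^2$ has edges between points at $L_1$ distance $1$. A weak consistent digital ray system (WCDR) with root $o$ assigns to each $p\in\mathbb{Z}^2$ a set $R_o(p)$ such that: (S1) $R_o(p)$ is the vertex set of a path from $o$ to $p$ in the grid graph; (S3) for every $q\in R_o(p)$, $R_o(q)\subseteq R_o(p)$; (S5) if $p_x=o_x$ (resp. $p_y=o_y$) then all points of $R_o(p)$ have $x$-coordinate $o_x$ (resp. $y$-coordinate $o_y$). Its error is $\sup_p \max_{v\in R_o(p)}\mathrm{dist}_\infty(v,\overline{op})$, with $\overline{op}$ the Euclidean segment and $\mathrm{dist}_\infty$ the $L_\infty$ distance. $Q_1=\{p\in\mathbb{Z}^2:p_x\ge0,p_y\ge0\}$, $D(p)=p_x+p_y$. A point $v$ extends to diagonal $d$ if there is $p\in Q_1$ with $D(p)=d$ and $v\in R_o(p)$. *)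

(* Defs.v *)
From mathcomp Require Import all_boot all_order all_algebra.
From mathcomp Require Import reals.
Set Implicit Arguments. Unset Strict Implicit. Unset Printing Implicit Defensive.
Import Order.TTheory GRing.Theory Num.Theory.
Local Open Scope ring_scope.

Definition pt := (int * int)%type.

Definition grid_adj (u v : pt) : bool :=
  (absz (u.1 - v.1) + absz (u.2 - v.2) == 1)%N.

Definition grid_path (o p : pt) (s : seq pt) : Prop :=
  exists rest : seq pt,
    [/\ s = o :: rest, path grid_adj o rest, last o rest = p & uniq s].

(* A ray system: Ro p v  means  v \in R_o(p). *)
Definition ray_system := pt -> pt -> Prop.

(* Weak consistent digital ray system with root o: axioms (S1), (S3), (S5). *)
Definition WCDR (o : pt) (Ro : ray_system) : Prop :=
  [/\ forall p : pt, exists s : seq pt,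
                 grid_path o p s /\ (forall v, Ro p v <-> v \in s),
      forall p q : pt, Ro p q -> forall v, Ro q v -> Ro p v
    & forall p : pt,
                 (p.1 = o.1 -> forall v, Ro p v -> v.1 = o.1) /\
                 (p.2 = o.2 -> forall v, Ro p v -> v.2 = o.2)].

(* dist_inf(v, segment [o,p]) <= e, where the segment is compact so the
   distance is attained at some point o + t (p - o), t in [0,1]. *)
Definition dist_seg_le (R : realType) (o p v : pt) (e : R) : Prop :=
  exists t : R, [/\ 0 <= t, t <= 1,
    `| (v.1)%:~R - ((o.1)%:~R + t * ((p.1)%:~R - (o.1)%:~R)) | <= e
  & `| (v.2)%:~R - ((o.2)%:~R + t * ((p.2)%:~R - (o.2)%:~R)) | <= e].

(* error(Ro) < c  :  sup_p max_{v in R_o(p)} dist_inf(v, op) < c. *)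
Definition error_lt (R : realType) (o : pt) (Ro : ray_system) (c : R) : Prop :=
  exists e : R, e < c /\ forall p v : pt, Ro p v -> dist_seg_le o p v e.

Definition inQ1 (p : pt) : Prop := 0 <= p.1 /\ 0 <= p.2.

Definition Dg (p : pt) : int := p.1 + p.2.

Definition extends_to (Ro : ray_system) (v : pt) (d : int) : Prop :=
  exists p : pt, [/\ inQ1 p, Dg p = d & Ro p v].

(* Main.v *)
Require Import Defs.
From mathcomp Require Import all_boot all_order all_algebra.
From mathcomp Require Import reals.
From mathcomp Require Import zify ring lra.
Import Order.TTheory GRing.Theory Num.Theory.
Local Open Scope ring_scope.

Lemma adj_D (u v : pt) : grid_adj u v -> Dg v <= Dg u + 1.
Proof. rewrite /grid_adj /Dg => /eqP H. lia. Qed.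

Lemma ivt_path (k : int) (x : pt) (rest : seq pt) :
  path grid_adj x rest -> Dg x <= k <= Dg (last x rest) ->
  exists u, u \in x :: rest /\ Dg u = k.
Proof.
elim: rest x => [|y rest IH] x /=.
  move=> _ h; exists x; split; [by rewrite inE|lia].
move=> /andP [hxy hp] h.
case: (eqVneq (Dg x) k) => [<-|hne]; first by exists x; rewrite inE eqxx.
have hy := @adj_D x y hxy.
have [u [hu hk]] := IH y hp ltac:(lia).
by exists u; split => //; rewrite inE hu orbT.
Qed.

Lemma ivt (o p : pt) (s : seq pt) (k : int) :
  grid_path o p s -> Dg o <= k <= Dg p -> exists u, u \in s /\ Dg u = k.
Proof.
move=> [rest [-> hp hl _]] hk.
apply: (@ivt_path k o rest hp). by rewrite hl.
Qed.

Lemma L1 (R : realType) (e S a b x y : R) : e < 3/2 -> 1 <= a -> 0 <= b -> x + y = a + b ->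
  `|x - S*(2*a-1)| <= e -> `|y - S*(2*b+1)| <= e -> a - 2 < x < a + 1.
Proof.
move=> he ha hb hxy /ler_normlP [h1 h2] /ler_normlP [h3 h4].
apply/andP; split; rewrite ltNge; apply/negP => hx.
- have : S < 1/2 by nra.
  nra.
- nra.
Qed.

Lemma L2 (R : realType) (e S a b d x y : R) : e < 3/2 -> 0 <= S -> 1 <= a -> 0 <= b ->
  a + b + 1 <= d -> x + y = d ->
  `|x - S*(2*a-1)| <= e -> `|y - S*(2*b+1)| <= e -> -1 < x /\ -1 < y.
Proof.
move=> he hS ha hb hd hxy /ler_normlP [h1 h2] /ler_normlP [h3 h4].
split; rewrite ltNge; apply/negP => hx.
- have : S < 1/2 by nra.
  nra.
- have : S < 1/2 by nra.
  nra.
Qed.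

Lemma castE (R : realType) (z : int) (n : nat) : (z%:~R : R) = z%:~R. Proof. by []. Qed.

Lemma cE (R : realType) (t : R) (a d : int) (c : int) :
  ((0:int)%:~R + t * ((d * (2*a+c))%:~R - (0:int)%:~R)) = t * d%:~R * (2 * a%:~R + c%:~R) :> R.
Proof. rewrite !mulr0z add0r subr0 intrM rmorphD /= intrM mulrA. by []. Qed.

Lemma L1i (R : realType) (e t : R) (a b d x y : int) : e < 3/2 -> 1 <= a -> 0 <= b -> x + y = a + b ->
  `|x%:~R - ((0:int)%:~R + t * ((d * (2*a-1))%:~R - (0:int)%:~R))| <= e ->
  `|y%:~R - ((0:int)%:~R + t * ((d * (2*b+1))%:~R - (0:int)%:~R))| <= e -> a - 2 < x < a + 1.
Proof.
move=> he ha hb hxy.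
rewrite (cE _ t a d (- 1)) (cE _ t b d 1).
have hxy' : (x%:~R : R) + y%:~R = a%:~R + b%:~R by rewrite -!rmorphD /= hxy.
have ha' : (1 : R) <= a%:~R by rewrite ler1z.
have hb' : (0 : R) <= b%:~R by rewrite ler0z.
have := @L1 R e (t * d%:~R) a%:~R b%:~R x%:~R y%:~R he ha' hb' hxy'.
rewrite rmorphN /= => H h1 h2; move: (H h1 h2) => /andP [].
have -> : (a%:~R - 2 : R) = (a - 2)%:~R by rewrite rmorphB.
have -> : (a%:~R + 1 : R) = (a + 1)%:~R by rewrite rmorphD.
by rewrite !ltr_int => -> ->.
Qed.

Lemma L2i (R : realType) (e t : R) (a b d x y : int) : e < 3/2 -> 0 <= t -> 1 <= a -> 0 <= b ->
  a + b + 1 <= d -> x + y = d ->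
  `|x%:~R - ((0:int)%:~R + t * ((d * (2*a-1))%:~R - (0:int)%:~R))| <= e ->
  `|y%:~R - ((0:int)%:~R + t * ((d * (2*b+1))%:~R - (0:int)%:~R))| <= e -> 0 <= x /\ 0 <= y.
Proof.
move=> he ht ha hb hd hxy.
rewrite (cE _ t a d (- 1)) (cE _ t b d 1).
have hxy' : (x%:~R : R) + y%:~R = d%:~R by rewrite -!rmorphD /= hxy.
have ha' : (1 : R) <= a%:~R by rewrite ler1z.
have hb' : (0 : R) <= b%:~R by rewrite ler0z.
have hd' : (a%:~R + b%:~R + 1 : R) <= d%:~R by rewrite -(ler_int R) !rmorphD in hd.
have hS : 0 <= t * d%:~R :> R by rewrite mulr_ge0 // ler0z; lia.
have := @L2 R e (t * d%:~R) a%:~R b%:~R d%:~R x%:~R y%:~R he hS ha' hb' hd' hxy'.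
rewrite rmorphN /= => H h1 h2; move: (H h1 h2) => [].
have -> : (-1 : R) = (- 1)%:~R by rewrite rmorphN.
by rewrite !ltr_int; lia.
Qed.

Lemma core (Ro : ray_system) :
  (forall p : pt, exists s : seq pt, grid_path (0,0) p s /\ (forall v, Ro p v <-> v \in s)) ->
  (forall p q : pt, Ro p q -> forall v, Ro q v -> Ro p v) ->
  forall (v w P : pt) (d : int), 0 <= Dg v -> Dg v < d -> d <= Dg P -> ~ extends_to Ro v d ->
  (forall u, Ro P u -> Dg u = Dg v -> u = v \/ u = w) ->
  (forall u, Ro P u -> Dg u = d -> inQ1 u) -> extends_to Ro w d.
Proof.
move=> S1 S3 v w P d h0 hvd hdP hne hwin hq.
have D0 : Dg (0,0) = 0 by [].
have [s [hs hRs]] := S1 P.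
have [q [qs qd]] := @ivt (0,0) P s d hs ltac:(rewrite D0; lia).
have RPq : Ro P q by apply/hRs.
have [s' [hs' hRs']] := S1 q.
have [u [us ud]] := @ivt (0,0) q s' (Dg v) hs' ltac:(rewrite D0 qd; lia).
have Rqu : Ro q u by apply/hRs'.
have RPu := S3 _ _ RPq _ Rqu.
case: (hwin u RPu ud) => [euv|euw].
  by exfalso; apply: hne; exists q; split => //; [exact: hq | rewrite -euv].
by exists q; split => //; [exact: hq | rewrite -euw].
Qed.

Theorem lemma6 (R : realType) (Ro : ray_system) :
  WCDR (0, 0) Ro -> error_lt (0, 0) Ro (3 / 2 : R) ->
  forall (v : pt) (d : int), inQ1 v -> Dg v < d -> ~ extends_to Ro v d ->
    (inQ1 (v.1 - 1, v.2 + 1) -> extends_to Ro (v.1 - 1, v.2 + 1) d) /\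
    (inQ1 (v.1 + 1, v.2 - 1) -> extends_to Ro (v.1 + 1, v.2 - 1) d).
Proof.
move=> [S1 S3 _] [e [he herr]] [a b] d [/= ha hb] hvd hne.
rewrite /Dg /= in hvd.
split => -[/= ha' hb'].
- apply: (core Ro S1 S3 (a, b) _ (d * (2*a-1), d * (2*b+1)) d _ _ _ hne) => //=; rewrite /Dg /=.
  + lia.
  + nia.
  + move=> [x y] /herr [t [t0 t1 hx hy]] /= hk; rewrite /= in hx hy.
    have /andP [l1 l2] := @L1i R e t a b d x y he ltac:(lia) hb hk hx hy.
    have : x = a \/ x = a - 1 by lia.
    case=> hx0; [left | right]; congr pair; lia.
  + move=> [x y] /herr [t [t0 t1 hx hy]] /= hk; rewrite /= in hx hy.
    have := @L2i R e t a b d x y he t0 ltac:(lia) hb ltac:(lia) hk hx hy.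
    by case=> h1 h2; split.
- apply: (core Ro S1 S3 (a, b) _ (d * (2*a+1), d * (2*b-1)) d _ _ _ hne) => //=; rewrite /Dg /=.
  + lia.
  + nia.
  + move=> [x y] /herr [t [t0 t1 hx hy]] /= hk; rewrite /= in hx hy.
    have /andP [l1 l2] := @L1i R e t b a d y x he ltac:(lia) ha ltac:(lia) hy hx.
    have : y = b \/ y = b - 1 by lia.
    case=> hx0; [left | right]; congr pair; lia.
  + move=> [x y] /herr [t [t0 t1 hx hy]] /= hk; rewrite /= in hx hy.
    have := @L2i R e t b a d y x he t0 ltac:(lia) ha ltac:(lia) ltac:(lia) hy hx.
    by case=> h1 h2; split.
Qed.
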